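(* Let $\mathcal{A}=\{A,B\}$ be two quantum systems with finite-dimensional Hilbert spaces and $\rho_{AB}$ a state. Then $$\lim_{q\to1}\mathfrak{X}_q^{\Delta_{\{A\}}}(\infty)=\lim_{q\to1}\widetilde{\mathfrak{X}}_q(\infty)=I(A:B)_\rho\ge0,$$ where $I(A:B)_\rho=S(A)+S(B)-S(AB)$ is the quantum mutual information.
   Context: For $q>1$ and nonempty $J\subseteq\mathcal{A}$: $S_q(J)_\rho=\frac{1}{1-q}(\operatorname{Tr}\rho_J^q-1)$ (Tsallis entropy of the reduced state), $S$ the von Neumann entropy, $C_q(J)_\rho=\sum_{v\in J}S_q(\{v\})_\rho-S_q(J)_\rho$. The filtration is $G(\varepsilon)=\{\varnothing\ne J\subseteq\mathcal{A}:C_q(J)_\rho\le\varepsilon\}$. $\Delta_{\{A\}}$ is the subcomplex consisting of the single vertex $\{A\}$. The relative integrated Euler characteristic is $\mathfrak{X}_q^{\Delta_{\{A\}}}(\infty)=\sum_{k\ge0}(-1)^k\int_0^\infty\operatorname{rank}H_k(G(\varepsilon),G(\varepsilon)\cap\Delta_{\{A\}};\mathbb{Z}_2)\,d\varepsilon$. The reduced integrated Euler characteristic is $\widetilde{\mathfrak{X}}_q(\infty)=\sum_{k\ge0}(-1)^k\int_0^\infty\widetilde\beta_k(\varepsilon)d\varepsilon$, where $\widetilde\beta_k=\operatorname{rank}H_k(G(\varepsilon);\mathbb{Z}_2)$ for $k>0$ and $\widetilde\beta_0=\max(\operatorname{rank}H_0(G(\varepsilon);\mathbb{Z}_2)-1,0)$.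 *)

(* Defs.v *)
From HB Require Import structures.
From mathcomp Require Import all_boot all_order all_algebra.
From mathcomp Require Import complex.
From mathcomp Require Import all_classical all_reals all_analysis.
Set Implicit Arguments. Unset Strict Implicit. Unset Printing Implicit Defensive.
Import Order.TTheory GRing.Theory Num.Theory.
Local Open Scope ring_scope.

(* The relative chain complex C(K)/C(L) has basis the simplices of K \ L;   *)
(* its boundary map sends a k-simplex to the sum of its (k-1)-faces lying   *)
(* in K \ L.  rank H_k = dim ker d_k - rank d_{k+1}.                        *)

Definition simp (V : finType) (K : {set {set V}}) (k : nat) : {set {set V}} :=
  [set s in K | #|s| == k.+1].

(* matrix of the boundary map d_{k+1} : C_{k+1}(K) -> C_k(K) over F_2
   (rows: (k+1)-simplices, columns: k-simplices) *)
Definition bdmx (V : finType) (K : {set {set V}}) (k : nat)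
  : 'M['F_2]_(#|simp K k.+1|, #|simp K k|) :=
  \matrix_(i, j) (if @enum_val _ (mem (simp K k)) j
                      \subset @enum_val _ (mem (simp K k.+1)) i
                  then 1 else 0).

Definition relbetti (V : finType) (K L : {set {set V}}) (k : nat) : nat :=
  let M := K :\: L in
  (#|simp M k| - (if k is k'.+1 then \rank (bdmx M k') else 0%N)
     - \rank (bdmx M k))%N.

Definition betti (V : finType) (K : {set {set V}}) (k : nat) : nat :=
  relbetti K finset.set0 k.

Definition rbetti (V : finType) (K : {set {set V}}) (k : nat) : nat :=
  if k is 0 then (betti K 0).-1 else betti K k.

(* sum_{k >= 0} (-1)^k int_0^oo b_k(eps) d eps.  Simplices have at most #|V|
   vertices, so b_k = 0 for k >= #|V|; the sum is taken over k < #|V|.+1. *)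
Definition integrated_euler (R : realType) (V : finType)
  (b : R -> nat -> nat) : \bar R :=
  (\sum_(k < #|V|.+1)
     ((-1) ^+ k)%:E *
     \int[lebesgue_measure]_(e in `[0%R, +oo[%classic) ((b e k)%:R)%:E)%E.

(* Quantum part: bipartite system AB with Hilbert space C^dA (x) C^dB.      *)
(* Basis vector |i>|j> of the tensor product is indexed by mxvec_index i j. *)

Local Open Scope sesquilinear_scope.
Local Open Scope complex_scope.

Definition is_state (R : realType) (n : nat) (rho : 'M[R[i]]_n) : Prop :=
  rho ^t* = rho /\
  (forall v : 'rV[R[i]]_n, 0 <= (v *m rho *m v ^t*) 0 0) /\
  \tr rho = 1.

Definition ptraceB (R : realType) (dA dB : nat) (rho : 'M[R[i]]_(dA * dB))
  : 'M[R[i]]_dA :=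
  \matrix_(i, i') \sum_(j < dB) rho (mxvec_index i j) (mxvec_index i' j).
Definition ptraceA (R : realType) (dA dB : nat) (rho : 'M[R[i]]_(dA * dB))
  : 'M[R[i]]_dB :=
  \matrix_(j, j') \sum_(i < dA) rho (mxvec_index i j) (mxvec_index i j').

Definition mxfun (R : realType) (n : nat) (f : R[i] -> R[i]) (M : 'M[R[i]]_n)
  : 'M[R[i]]_n :=
  invmx (spectralmx M) *m diag_mx (map_mx f (spectral_diag M)) *m spectralmx M.

(* Tr rho^q  (rho >= 0, q real; the eigenvalues are real) *)
Definition trpow (R : realType) (n : nat) (q : R) (rho : 'M[R[i]]_n) : R :=
  complex.Re (\tr (mxfun (fun z => ((complex.Re z) `^ q)%:C) rho)).

Definition tsallis (R : realType) (n : nat) (q : R) (rho : 'M[R[i]]_n) : R :=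
  (1 - q)^-1 * (trpow q rho - 1).

Definition vonNeumann (R : realType) (n : nat) (rho : 'M[R[i]]_n) : R :=
  - complex.Re (\tr (mxfun (fun z => (complex.Re z * ln (complex.Re z))%:C) rho)).

Definition mutual_info (R : realType) (dA dB : nat) (rho : 'M[R[i]]_(dA * dB)) : R :=
  vonNeumann (ptraceB rho) + vonNeumann (ptraceA rho) - vonNeumann rho.

Definition sysA : 'I_2 := ord0.
Definition sysB : 'I_2 := ord_max.

Definition SqJ (R : realType) (dA dB : nat) (q : R) (rho : 'M[R[i]]_(dA * dB))
  (J : {set 'I_2}) : R :=
  if J == [set sysA] then tsallis q (ptraceB rho)
  else if J == [set sysB] then tsallis q (ptraceA rho)
  else tsallis q rho.

Definition CqJ (R : realType) (dA dB : nat) (q : R) (rho : 'M[R[i]]_(dA * dB))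
  (J : {set 'I_2}) : R :=
  \sum_(v in J) SqJ q rho [set v] - SqJ q rho J.

Definition Gfilt (R : realType) (dA dB : nat) (q : R) (rho : 'M[R[i]]_(dA * dB))
  (eps : R) : {set {set 'I_2}} :=
  [set J | (J != finset.set0) && (CqJ q rho J <= eps)].

Definition DeltaA : {set {set 'I_2}} := [set [set sysA]].

Definition Xrel (R : realType) (dA dB : nat) (rho : 'M[R[i]]_(dA * dB)) (q : R)
  : \bar R :=
  @integrated_euler R 'I_2
    (fun e k => relbetti (Gfilt q rho e) (Gfilt q rho e :&: DeltaA) k).

Definition Xred (R : realType) (dA dB : nat) (rho : 'M[R[i]]_(dA * dB)) (q : R)
  : \bar R :=
  @integrated_euler R 'I_2 (fun e k => rbetti (Gfilt q rho e) k).

(* Main.v *)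
Require Import Defs.
From HB Require Import structures.
From mathcomp Require Import all_boot all_order all_algebra.
From mathcomp Require Import complex.
From mathcomp Require Import all_classical all_reals all_analysis.
From mathcomp Require Import ring lra.
Import Order.TTheory GRing.Theory Num.Theory.
Set Implicit Arguments. Unset Strict Implicit. Unset Printing Implicit Defensive.
Lemma I2_cases (x : 'I_2) : x = sysA \/ x = sysB.
Proof. case: x => [[|[|n]] H]; [left|right|] => //; exact: val_inj. Qed.

Lemma sysAB : (sysA == sysB) = false. Proof. by []. Qed.
Lemma sysBA : (sysB == sysA) = false. Proof. by []. Qed.

Lemma eqset2 (s t : {set 'I_2}) :
  (s == t) = ((sysA \in s) == (sysA \in t)) && ((sysB \in s) == (sysB \in t)).
Proof.
apply/eqP/andP => [->|[/eqP a /eqP b]]; first by [].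
by apply/setP => x; case: (I2_cases x) => ->.
Qed.

Lemma set2_cases (s : {set 'I_2}) :
  [\/ s = finset.set0, s = [set sysA], s = [set sysB] | s = [set: 'I_2]].
Proof.
have E : forall t, (s == t) = ((sysA \in s) == (sysA \in t)) && ((sysB \in s) == (sysB \in t)) by move=> t; exact: eqset2.
case a: (sysA \in s); case b: (sysB \in s).
- by apply: Or44; apply/eqP; rewrite E a b !inE.
- by apply: Or42; apply/eqP; rewrite E a b !inE.
- by apply: Or43; apply/eqP; rewrite E a b !inE.
- by apply: Or41; apply/eqP; rewrite E a b !inE.
Qed.

Lemma cardA : #|[set sysA]| = 1%N. Proof. exact: cards1. Qed.
Lemma cardB : #|[set sysB]| = 1%N. Proof. exact: cards1. Qed.
Lemma cardT2 : #|[set: 'I_2]| = 2%N. Proof. by rewrite cardsT card_ord. Qed.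

Definition K0 : {set {set 'I_2}} := [set [set sysA]; [set sysB]].
Definition K1 : {set {set 'I_2}} := [set [set sysA]; [set sysB]; [set: 'I_2]].

Lemma setP2 (A B : {set {set 'I_2}}) : (finset.set0 \in A) = (finset.set0 \in B) ->
  ([set sysA] \in A) = ([set sysA] \in B) -> ([set sysB] \in A) = ([set sysB] \in B) ->
  ([set: 'I_2] \in A) = ([set: 'I_2] \in B) -> A = B.
Proof. by move=> h1 h2 h3 h4; apply/setP => s; case: (set2_cases s) => ->. Qed.

Ltac simp_tac := apply: setP2; rewrite /simp /K0 /K1 /DeltaA !inE
  ?cards0 ?cardA ?cardB ?cardT2 ?eqset2 ?inE ?sysAB ?sysBA //.

Lemma rank_bd0 (M : {set {set 'I_2}}) k : #|simp M k.+1| = 0%N -> \rank (bdmx M k) = 0%N.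
Proof.
by move=> h; apply/eqP; rewrite -leqn0; apply: leq_trans (rank_leq_row (bdmx M k)) _; rewrite h.
Qed.

Lemma rank_bd1 (M : {set {set 'I_2}}) k s t :
  simp M k.+1 = [set s] -> t \in simp M k -> t \subset s -> \rank (bdmx M k) = 1%N.
Proof.
move=> hs ht hts; apply/eqP; rewrite eqn_leq; apply/andP; split.
  have h1 : #|simp M k.+1| = 1%N by rewrite hs cards1.
  by apply: leq_trans (rank_leq_row (bdmx M k)) _; rewrite h1.
rewrite lt0n mxrank_eq0; apply/eqP => /matrixP.
have hs' : s \in simp M k.+1 by rewrite hs set11.
move/(_ (enum_rank_in hs' s) (enum_rank_in ht t)).
rewrite !mxE !enum_rankK_in //.
by rewrite hts.
Qed.


Lemma subz3 (a b c : nat) : a = 0%N -> (a - b - c = 0)%N.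
Proof. by move=> ->. Qed.

Lemma relb_K0 k : (k < 3)%N -> relbetti K0 (K0 :&: DeltaA) k = (k == 0)%N.
Proof.
rewrite /relbetti.
have e0 : simp (K0 :\: (K0 :&: DeltaA)) 0 = [set [set sysB]] by simp_tac.
have e1 : simp (K0 :\: (K0 :&: DeltaA)) 1 = finset.set0 by simp_tac.
have e2 : simp (K0 :\: (K0 :&: DeltaA)) 2 = finset.set0 by simp_tac.
have e3 : simp (K0 :\: (K0 :&: DeltaA)) 3 = finset.set0 by simp_tac.
case: k => [|[|[|k]]] // _.
- by rewrite rank_bd0 ?e0 ?e1 ?cards1 ?cards0.
- by apply: subz3; rewrite e1 cards0.
- by apply: subz3; rewrite e2 cards0.
Qed.

Lemma relb_K1 k : (k < 3)%N -> relbetti K1 (K1 :&: DeltaA) k = 0%N.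
Proof.
rewrite /relbetti.
set M := K1 :\: (K1 :&: DeltaA).
have e0 : simp (K1 :\: (K1 :&: DeltaA)) 0 = [set [set sysB]] by simp_tac.
have e1 : simp (K1 :\: (K1 :&: DeltaA)) 1 = [set [set: 'I_2]] by simp_tac.
have e2 : simp (K1 :\: (K1 :&: DeltaA)) 2 = finset.set0 by simp_tac.
case: k => [|[|[|k]]] // _.
- by rewrite (@rank_bd1 _ 0 [set: 'I_2] [set sysB]) ?e0 ?e1 ?cards1 ?set11 ?finset.subsetT.
- have r0 : \rank (bdmx M 0) = 1%N.
    by apply: (@rank_bd1 _ 0 [set: 'I_2] [set sysB]); rewrite ?e0 ?e1 ?set11 ?finset.subsetT ?inE ?eqxx ?orbT.
  have r1 : \rank (bdmx M 1) = 0%N by apply: rank_bd0; rewrite e2 cards0.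
  have c1 : #|simp M 1| = 1%N by rewrite e1 cards1.
  by rewrite r0 r1 c1.
- by apply: subz3; rewrite e2 cards0.
Qed.

Lemma rb_K0 k : (k < 3)%N -> rbetti K0 k = (k == 0)%N.
Proof.
rewrite /rbetti /betti /relbetti finset.setD0.
have e0 : simp K0 0 = [set [set sysA]; [set sysB]] by simp_tac.
have e1 : simp K0 1 = finset.set0 by simp_tac.
have e2 : simp K0 2 = finset.set0 by simp_tac.
have e3 : simp K0 3 = finset.set0 by simp_tac.
case: k => [|[|[|k]]] // _.
- by rewrite rank_bd0 ?e1 ?cards0 // e0 cards2 eqset2 !inE.
- by apply: subz3; rewrite e1 cards0.
- by apply: subz3; rewrite e2 cards0.
Qed.

Lemma rb_K1 k : (k < 3)%N -> rbetti K1 k = 0%N.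
Proof.
rewrite /rbetti /betti /relbetti finset.setD0.
set M := K1.
have e0 : simp K1 0 = [set [set sysA]; [set sysB]] by simp_tac.
have e1 : simp K1 1 = [set [set: 'I_2]] by simp_tac.
have e2 : simp K1 2 = finset.set0 by simp_tac.
have hB : [set sysB] \in simp K1 0 by rewrite e0 !inE eqxx orbT.
have r0 : \rank (bdmx M 0) = 1%N.
  by apply: (@rank_bd1 _ 0 [set: 'I_2] [set sysB]); rewrite ?e0 ?e1 ?set11 ?finset.subsetT ?inE ?eqxx ?orbT.
case: k => [|[|[|k]]] // _.
- by rewrite r0 e0 cards2 eqset2 !inE.
- have r0' : \rank (bdmx M 0) = 1%N.
    by apply: (@rank_bd1 _ 0 [set: 'I_2] [set sysB]); rewrite ?e0 ?e1 ?set11 ?finset.subsetT ?inE ?eqxx ?orbT.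
  have r1 : \rank (bdmx M 1) = 0%N by apply: rank_bd0; rewrite e2 cards0.
  have c1 : #|simp M 1| = 1%N by rewrite e1 cards1.
  by rewrite r0 r1 c1.
- by apply: subz3; rewrite e2 cards0.
Qed.



Local Open Scope ring_scope.
Local Open Scope classical_set_scope.

Section Int.
Variable R : realType.

Lemma int_ind (c : R) :
  (\int[lebesgue_measure]_(e in `[0%R, +oo[) ((e < c)%R%:R)%:E = (Num.max c 0)%:E)%E.
Proof.
transitivity (\int[lebesgue_measure]_(e in `[0%R, +oo[) (\1_(`]-oo, c[ : set R) e)%:E)%E.
  apply: eq_integral => e _; rewrite indicE /=.
  suff -> : (e \in (`]-oo, c[ : set R)) = (e < c) by [].
  apply/idP/idP => h; [move/set_mem: h; by rewrite /= in_itv /= | apply/mem_set; by rewrite /= in_itv /= h].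
rewrite integral_indic; [|exact: measurable_itv|exact: measurable_itv].
have -> : `]-oo, c[ `&` `[0%R, +oo[ = `[0%R, c[.
  apply/seteqP; split => x /=; rewrite !in_itv /=.
    by move=> [h1 h2]; rewrite andbT in h2; rewrite h2 h1.
  by move=> /andP[h1 h2]; rewrite h1 h2.
have := @lebesgue_measure_itv R (Interval (BLeft 0%R) (BLeft c)); rewrite /= lte_fin => ->.
case: ltP => h.
  by rewrite oppr0 adde0.
by [].
Qed.

Lemma euler_eq (b : R -> nat -> nat) (c : R) :
  (forall e, 0 <= e -> forall k, (k < 3)%N -> b e k = ((k == 0)%N && (e < c)) :> nat) ->
  @integrated_euler R 'I_2 b = (Num.max c 0)%:E.
Proof.
move=> hb; rewrite /integrated_euler card_ord.
have D0 : forall e : R, e \in (`[0%R, +oo[ : set R) -> 0 <= e.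
  by move=> e /set_mem; rewrite /= in_itv /= andbT.
rewrite (eq_bigr (fun k : 'I_3 => if val k == 0%N then (Num.max c 0)%:E else 0%E)); last first.
  move=> [k hk] _ /=; case: k hk => [|k] hk /=.
    rewrite expr0 mul1e -int_ind; apply: eq_integral => e /D0 e0; by rewrite hb.
  rewrite -(integral0 lebesgue_measure `[0%R, +oo[).
  have -> : (\int[lebesgue_measure]_(e in `[0%R, +oo[) ((b e k.+1)%:R)%:E)%E =
    (\int[lebesgue_measure]_(e in `[0%R, +oo[) (cst 0%R e)%:E)%E.
    by apply: eq_integral => e /D0 e0; rewrite hb.
  by rewrite integral0 mule0.
by rewrite big_ord_recl /= big1 ?adde0.
Qed.

Lemma CqJ1 dA dB q (rho : 'M[R[i]]_(dA * dB)) v : CqJ q rho [set v] = 0.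
Proof. by rewrite /CqJ big_set1 subrr. Qed.

Lemma Gfilt_eq dA dB q (rho : 'M[R[i]]_(dA * dB)) e : 0 <= e ->
  Gfilt q rho e = if CqJ q rho [set: 'I_2] <= e then K1 else K0.
Proof.
move=> e0; case: ifP => h; apply: setP2; rewrite /Gfilt /K0 /K1 !inE ?CqJ1 ?h ?e0
  ?eqset2 ?inE ?sysAB ?sysBA ?eqxx //.
Qed.

Lemma Xrel_eq dA dB (rho : 'M[R[i]]_(dA * dB)) q :
  Xrel rho q = (Num.max (CqJ q rho [set: 'I_2]) 0)%:E.
Proof.
apply: euler_eq => e e0 k k3; rewrite Gfilt_eq //.
case h: (CqJ q rho [set: 'I_2] <= e).
  by rewrite relb_K1 //; case: (k == 0)%N; rewrite ?andbF ?andbT //= ltNge h.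
by rewrite relb_K0 // ltNge h andbT.
Qed.

Lemma Xred_eq dA dB (rho : 'M[R[i]]_(dA * dB)) q :
  Xred rho q = (Num.max (CqJ q rho [set: 'I_2]) 0)%:E.
Proof.
apply: euler_eq => e e0 k k3; rewrite Gfilt_eq //.
case h: (CqJ q rho [set: 'I_2] <= e).
  by rewrite rb_K1 //; case: (k == 0)%N; rewrite ?andbF ?andbT //= ltNge h.
by rewrite rb_K0 // ltNge h andbT.
Qed.
End Int.

Section RealIneq.
Variable R : realType.

Lemma ln_le_sub1 (x : R) : 0 < x -> ln x <= x - 1.
Proof.
move=> x0; have h : -1 < x - 1 by lra.
by have := le_ln1Dx h; have -> : 1 + (x - 1) = x by ring.
Qed.

Lemma term_ineq (m p a b : R) : 0 <= m -> 0 <= p -> 0 <= a -> 0 <= b ->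
  m * p <= a -> m * p <= b ->
  m * (p - a * b) <= m * p * (ln p - ln a - ln b).
Proof.
move=> m0 p0 a0 b0 ha hb.
have [->|mn0] := eqVneq m 0; first by rewrite !mul0r.
have [->|pn0] := eqVneq p 0.
  rewrite mulr0 mul0r; have := mulr_ge0 m0 (mulr_ge0 a0 b0); lra.
have mp : 0 < m by rewrite lt_def mn0.
have pp : 0 < p by rewrite lt_def pn0.
have ap : 0 < a by apply: lt_le_trans ha; rewrite mulr_gt0.
have bp : 0 < b by apply: lt_le_trans hb; rewrite mulr_gt0.
have h := ln_le_sub1 (divr_gt0 (mulr_gt0 ap bp) pp).
rewrite ln_div ?posrE ?mulr_gt0 // lnM ?posrE // in h.
have h2 : p * (ln a + ln b - ln p) <= a * b - p.
  have ht : p * (a * b / p) = a * b by field; rewrite lt0r_neq0.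
  nra.
nra.
Qed.

Lemma sum_ge_term (I : finType) (F : I -> R) i0 : (forall i, 0 <= F i) -> F i0 <= \sum_i F i.
Proof.
move=> F0; rewrite (bigD1 i0) //= lerDl; exact: sumr_ge0.
Qed.

Lemma subadd_real (N dA dB : nat) (p : 'I_N -> R) (m : 'I_N -> 'I_dA -> 'I_dB -> R)
  (a : 'I_dA -> R) (b : 'I_dB -> R) :
  (forall k, 0 <= p k) -> (forall k i j, 0 <= m k i j) -> \sum_k p k = 1 ->
  (forall k, \sum_i \sum_j m k i j = 1) -> (forall i j, \sum_k m k i j = 1) ->
  (forall i, a i = \sum_j \sum_k m k i j * p k) ->
  (forall j, b j = \sum_i \sum_k m k i j * p k) ->
  0 <= \sum_k p k * ln (p k) - \sum_i a i * ln (a i) - \sum_j b j * ln (b j).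
Proof.
move=> p0 m0 sp sm1 sm2 ha hb.
have a0 : forall i, 0 <= a i.
  by move=> i; rewrite ha; apply: sumr_ge0 => j _; apply: sumr_ge0 => k _; rewrite mulr_ge0.
have b0 : forall j, 0 <= b j.
  by move=> j; rewrite hb; apply: sumr_ge0 => i _; apply: sumr_ge0 => k _; rewrite mulr_ge0.
have E1 : \sum_k p k * ln (p k) = \sum_k \sum_i \sum_j m k i j * p k * ln (p k).
  apply: eq_bigr => k _; rewrite -[LHS]mul1r -(sm1 k) mulr_suml; apply: eq_bigr => i _.
  by rewrite mulr_suml; apply: eq_bigr => j _; rewrite mulrA.
have E2 : \sum_i a i * ln (a i) = \sum_k \sum_i \sum_j m k i j * p k * ln (a i).
  rewrite exchange_big /=; apply: eq_bigr => i _; rewrite {1}ha mulr_suml exchange_big /=.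
  by apply: eq_bigr => j _; rewrite mulr_suml.
have E3 : \sum_j b j * ln (b j) = \sum_k \sum_i \sum_j m k i j * p k * ln (b j).
  symmetry; rewrite exchange_big /=.
  rewrite (eq_bigr (fun i => \sum_j \sum_k m k i j * p k * ln (b j))); last first.
    by move=> i _; rewrite exchange_big.
  rewrite exchange_big /=; apply: eq_bigr => j _; rewrite {2}hb mulr_suml.
  by apply: eq_bigr => i _; rewrite mulr_suml.
have S1 : \sum_k \sum_i \sum_j m k i j * p k = 1.
  rewrite -sp; apply: eq_bigr => k _; rewrite -[RHS]mul1r -(sm1 k) mulr_suml.
  by apply: eq_bigr => i _; rewrite mulr_suml.
have Sa : \sum_i a i = 1.
  rewrite -S1 exchange_big /=; apply: eq_bigr => i _; rewrite ha exchange_big //.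
have Sb : \sum_j b j = 1.
  rewrite -S1; symmetry; rewrite exchange_big /=.
  rewrite (eq_bigr (fun i => \sum_j \sum_k m k i j * p k)); last first.
    by move=> i _; rewrite exchange_big.
  by rewrite exchange_big /=; apply: eq_bigr => j _; rewrite hb.
have S2 : \sum_k \sum_i \sum_j m k i j * (a i * b j) = 1.
  rewrite exchange_big /=.
  rewrite (eq_bigr (fun i => \sum_j \sum_k m k i j * (a i * b j))); last first.
    by move=> i _; rewrite exchange_big.
  rewrite -(mul1r 1) -{1}Sa -Sb mulr_suml; apply: eq_bigr => i _.
  rewrite mulr_sumr; apply: eq_bigr => j _.
  by rewrite -mulr_suml sm2 mul1r.
have Z : \sum_k \sum_i \sum_j m k i j * (p k - a i * b j) = 0.
  transitivity (1 - 1 : R); last by rewrite subrr.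
  rewrite -{1}S1 -S2 -sumrB; apply: eq_bigr => k _.
  rewrite -sumrB; apply: eq_bigr => i _.
  by rewrite -sumrB; apply: eq_bigr => j _; rewrite mulrBr mulrC.
rewrite E1 E2 E3 -[X in X <= _]Z -!sumrB; apply: ler_sum => k _.
rewrite -!sumrB; apply: ler_sum => i _.
rewrite -!sumrB; apply: ler_sum => j _.
have := @term_ineq (m k i j) (p k) (a i) (b j) (m0 k i j) (p0 k) (a0 i) (b0 j).
rewrite !mulrBr; apply.
- rewrite ha; apply: le_trans (sum_ge_term j _) => [|j']; last by apply: sumr_ge0 => k' _; rewrite mulr_ge0.
  by apply: le_trans (sum_ge_term k _) => [//|k']; rewrite mulr_ge0.
- rewrite hb; apply: le_trans (sum_ge_term i _) => [|i']; last by apply: sumr_ge0 => k' _; rewrite mulr_ge0.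
  by apply: le_trans (sum_ge_term k _) => [//|k']; rewrite mulr_ge0.
Qed.
End RealIneq.
Section Lim.
Variable R : realType.

Lemma expR_bound (x : R) : x <= 0 -> 0 <= expR x - 1 - x <= x ^+ 2.
Proof.
move=> x0; have h1 := expR_ge1Dx x; have h2 := expR_ge1Dx (- x).
have h3 := expRxMexpNx_1 x; have h4 := expR_gt0 x.
apply/andP; split; first by lra.
rewrite expr2; nra.
Qed.

Lemma pow_term (p q : R) : 0 <= p <= 1 -> 1 < q ->
  `| (p `^ q - p) / (q - 1) - p * ln p | <= (q - 1) * (p * ln p ^+ 2).
Proof.
move=> /andP[p0 p1] q1.
have [->|pn0] := eqVneq p 0.
  have q0 : q != 0 by rewrite gt_eqF // (lt_trans ltr01 q1).
  by rewrite powR0 // subrr mul0r !mul0r subrr normr0 mulr0.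
have pp : 0 < p by rewrite lt_def pn0.
have lp : ln p <= 0 by apply: ln_le0.
set x := (q - 1) * ln p.
have x0 : x <= 0 by rewrite /x; nra.
have e : p `^ q = p * expR x.
  rewrite /powR (negbTE pn0) /x -{2}(lnK (pp : p \in Num.pos)) -expRD; congr expR; ring.
have := expR_bound x0; move=> /andP[b1 b2].
have qp : 0 < q - 1 by lra.
have -> : (p `^ q - p) / (q - 1) - p * ln p = p * (expR x - 1 - x) / (q - 1).
  by rewrite e /x; field; lra.
rewrite ger0_norm ?divr_ge0 ?mulr_ge0 //; last by lra.
rewrite ler_pdivrMr //.
have : p * (expR x - 1 - x) <= p * x ^+ 2 by apply: ler_wpM2l.
by rewrite /x; move=> h; apply: le_trans h _; rewrite le_eqVlt; apply/orP; left; apply/eqP; ring.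
Qed.

Lemma tsallis_lim n (p : 'I_n -> R) : (forall k, 0 <= p k) -> \sum_k p k = 1 ->
  (1 - q)^-1 * (\sum_k p k `^ q - 1) @[q --> 1^'+] --> - \sum_k p k * ln (p k).
Proof.
move=> p0 sp.
have p1 : forall k, p k <= 1.
  by move=> k; rewrite -sp (bigD1 k) //= lerDl; apply: sumr_ge0.
set K := \sum_k p k * ln (p k) ^+ 2.
have K0 : 0 <= K by apply: sumr_ge0 => k _; rewrite mulr_ge0 // sqr_ge0.
apply/cvgrPdist_le => eps e0.
have d0 : 0 < eps / (K + 1) by rewrite divr_gt0 // ltr_wpDl.
near=> q.
have q1 : 1 < q by near: q; apply: nbhs_right_gt.
have q2 : q < 1 + eps / (K + 1) by near: q; apply: nbhs_right_lt; rewrite ltrDl.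
have qn1 : q - 1 != 0 by rewrite subr_eq0 gt_eqF.
have -> : - \sum_k p k * ln (p k) - (1 - q)^-1 * (\sum_k p k `^ q - 1) =
    \sum_k ((p k `^ q - p k) / (q - 1) - p k * ln (p k)).
  rewrite sumrB -mulr_suml sumrB sp addrC; congr (_ - _).
  have qn1' : 1 - q != 0 by rewrite subr_eq0 lt_eqF.
  by field; rewrite qn1 qn1'.
apply: le_trans (ler_norm_sum _ _ _) _.
apply: (@le_trans _ _ (\sum_k (q - 1) * (p k * ln (p k) ^+ 2))).
  by apply: ler_sum => k _; apply: pow_term; rewrite ?p0 ?p1.
rewrite -mulr_sumr -/K.
have : (q - 1) * (K + 1) <= eps.
  have hK : 0 < K + 1 by lra.
  have h : q - 1 <= eps / (K + 1) by lra.
  by have := ler_wpM2r (ltW hK) h; rewrite divfK ?gt_eqF.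
have : 0 <= q - 1 by rewrite subr_ge0 ltW.
nra.
Unshelve. all: by end_near.
Qed.
End Lim.

Section LinAlg.
Variable R : realType.
Local Notation C := (R[i]).
Local Open Scope sesquilinear_scope.
Local Open Scope complex_scope.

Lemma Re_sum (I : Type) (r : seq I) (P : pred I) (F : I -> C) :
  complex.Re (\sum_(i <- r | P i) F i) = \sum_(i <- r | P i) complex.Re (F i).
Proof. by apply: (big_rec2 (fun x y => complex.Re x = y)) => // i a b _ <-; case: (F i); case: a. Qed.

Lemma trace_mxfun n f (M : 'M[C]_n) :
  \tr (mxfun f M) = \sum_k f (spectral_diag M 0 k).
Proof.
rewrite /mxfun mxtrace_mulC mulmxA mulmxV ?spectral_unit // mul1mx mxtrace_diag.
by apply: eq_bigr => k _; rewrite mxE.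
Qed.

Lemma trpowE n q (M : 'M[C]_n) :
  trpow q M = \sum_k (complex.Re (spectral_diag M 0 k)) `^ q.
Proof. by rewrite /trpow trace_mxfun Re_sum. Qed.

Lemma vonNeumannE n (M : 'M[C]_n) :
  vonNeumann M = - \sum_k complex.Re (spectral_diag M 0 k) * ln (complex.Re (spectral_diag M 0 k)).
Proof. by rewrite /vonNeumann trace_mxfun Re_sum. Qed.

Lemma spec_conj n (A : 'M[C]_n) : A \is normalmx ->
  spectralmx A *m A *m (spectralmx A)^t* = diag_mx (spectral_diag A).
Proof.
move=> /orthomx_spectralP {2}->; rewrite invmx_unitary ?spectral_unitarymx //.
rewrite !mulmxA (unitarymxP (spectral_unitarymx A)) mul1mx -mulmxA.
by rewrite (unitarymxP (spectral_unitarymx A)) mulmx1.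
Qed.

Lemma herm_normal n (A : 'M[C]_n) : A ^t* = A -> A \is normalmx.
Proof. by move=> h; apply/normalmxP; rewrite h. Qed.

Lemma row_quad n (A M : 'M[C]_n) k :
  (row k A *m M *m (row k A)^t*) 0 0 = (A *m M *m A^t*) k k.
Proof.
rewrite -row_mul !mxE; apply: eq_bigr => j _; by rewrite !mxE.
Qed.

Lemma state_spec n (M : 'M[C]_n) : is_state M ->
  (forall k, 0 <= spectral_diag M 0 k) /\ \sum_k complex.Re (spectral_diag M 0 k) = 1.
Proof.
move=> [herm [psd tr1]]; have nM := herm_normal herm.
split.
  move=> k; have := psd (row k (spectralmx M)); rewrite row_quad spec_conj //.
  by rewrite mxE eqxx mulr1n.
rewrite -Re_sum -mxtrace_diag -spec_conj // mxtrace_mulC mulmxA.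
have u := spectral_unitarymx M; rewrite -trmxC_unitary in u.
by have := unitarymxP u; rewrite trmxCK => ->; rewrite mul1mx tr1.
Qed.

Lemma Cge0 (z : C) : 0 <= z -> z = (complex.Re z)%:C /\ 0 <= complex.Re z.
Proof.
case: z => a b /= h.
have : (b == 0) && (0 <= a) by exact: h.
by move=> /andP[/eqP -> ->].
Qed.

Lemma unit_rows m n (U : 'M[C]_(m, n)) : U \is unitarymx ->
  forall i i', \sum_x U i x * (U i' x)^* = (i == i')%:R.
Proof.
move=> /unitarymxP /matrixP h i i'; have := h i i'.
by rewrite !mxE => <-; apply: eq_bigr => x _; rewrite !mxE.
Qed.

Lemma unit_cols n (W : 'M[C]_n) : W \is unitarymx ->
  forall y y', \sum_j W j y * (W j y')^* = (y == y')%:R.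
Proof.
rewrite -trmx_unitary => /unit_rows h y y'; rewrite -h.
by apply: eq_bigr => j _; rewrite !mxE.
Qed.

Lemma sum_mxvec m n (F : 'I_(m * n) -> C) :
  \sum_k F k = \sum_i \sum_j F (mxvec_index i j).
Proof.
rewrite (reindex _ (curry_mxvec_bij m n)) /= pair_bigA /=.
by apply: eq_bigr => [[i j]].
Qed.

Lemma mxvec_index_eq m n (i i' : 'I_m) (j j' : 'I_n) :
  (mxvec_index i j == mxvec_index i' j') = (i == i') && (j == j').
Proof.
apply/eqP/andP => [h|[/eqP -> /eqP ->] //].
have /(congr1 enum_val) := cast_ord_inj h; rewrite !enum_rankK => [[-> ->]].
by split.
Qed.

Definition vidx m n (r : 'I_(m * n)) : 'I_m * 'I_n :=
  enum_val (cast_ord (esym (mxvec_cast m n)) r).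

Lemma vidxK m n (i : 'I_m) (j : 'I_n) : vidx (mxvec_index i j) = (i, j).
Proof. by rewrite /vidx /mxvec_index cast_ordK enum_rankK. Qed.

Definition kron m n (U : 'M[C]_m) (W : 'M[C]_n) : 'M[C]_(m * n) :=
  \matrix_(r, s) (U (vidx r).1 (vidx s).1 * W (vidx r).2 (vidx s).2).

Lemma kronE m n (U : 'M[C]_m) (W : 'M[C]_n) i j x y :
  kron U W (mxvec_index i j) (mxvec_index x y) = U i x * W j y.
Proof. by rewrite mxE !vidxK. Qed.

Lemma kron_unitary m n (U : 'M[C]_m) (W : 'M[C]_n) :
  U \is unitarymx -> W \is unitarymx -> kron U W \is unitarymx.
Proof.
move=> hU hW; apply/unitarymxP/matrixP => r r'.
case/mxvec_indexP: r => i j; case/mxvec_indexP: r' => i' j'.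
rewrite !mxE mxvec_index_eq sum_mxvec.
rewrite (eq_bigr (fun x => U i x * (U i' x)^* * \sum_y W j y * (W j' y)^*)); last first.
  move=> x _; rewrite mulr_sumr; apply: eq_bigr => y _.
  by rewrite /kron !mxE !vidxK /= rmorphM /=; ring.
by rewrite -mulr_suml unit_rows // unit_rows // -natrM mulnb.
Qed.

Lemma mx3E m n p q (A : 'M[C]_(m, n)) (B : 'M[C]_(n, p)) (D : 'M[C]_(p, q)) i k :
  (A *m B *m D) i k = \sum_j \sum_l A i j * B j l * D l k.
Proof.
rewrite mxE exchange_big /=; apply: eq_bigr => l _.
by rewrite mxE mulr_suml.
Qed.

Lemma delta_sum n (G : 'I_n -> C) y : \sum_y' G y' * (y == y')%:R = G y.
Proof.
rewrite (bigD1 y) //= eqxx mulr1 big1 ?addr0 // => y' /negbTE ne.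
by rewrite eq_sym ne mulr0.
Qed.

Lemma collapseW dA dB (W : 'M[C]_dB) (F : 'I_dA -> 'I_dB -> 'I_dA -> 'I_dB -> C) :
  W \is unitarymx ->
  \sum_j \sum_x \sum_y \sum_x' \sum_y' F x y x' y' * (W j y * (W j y')^*) =
  \sum_x \sum_y \sum_x' F x y x' y.
Proof.
move=> hW; rewrite exchange_big; apply: eq_bigr => x _.
rewrite exchange_big; apply: eq_bigr => y _.
rewrite exchange_big; apply: eq_bigr => x' _.
rewrite exchange_big /=.
rewrite (eq_bigr (fun y' => F x y x' y' * (y == y')%:R)); first exact: delta_sum.
by move=> y' _; rewrite -mulr_sumr unit_cols.
Qed.

Lemma collapseU dA dB (U : 'M[C]_dA) (F : 'I_dA -> 'I_dB -> 'I_dA -> 'I_dB -> C) :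
  U \is unitarymx ->
  \sum_i \sum_x \sum_y \sum_x' \sum_y' F x y x' y' * (U i x * (U i x')^*) =
  \sum_x \sum_y \sum_y' F x y x y'.
Proof.
move=> hU; rewrite exchange_big; apply: eq_bigr => x _.
rewrite exchange_big; apply: eq_bigr => y _.
rewrite exchange_big /=.
rewrite (eq_bigr (fun x' => \sum_y' \sum_i F x y x' y' * (U i x * (U i x')^*))); last by move=> x' _; rewrite exchange_big.
rewrite exchange_big /=; apply: eq_bigr => y' _.
rewrite (eq_bigr (fun x' => F x y x' y' * (x == x')%:R)); first exact: delta_sum.
by move=> x' _; rewrite -mulr_sumr unit_cols.
Qed.

Lemma ptB_sum dA dB (U : 'M[C]_dA) (W : 'M[C]_dB) (rho : 'M[C]_(dA * dB)) i :
  W \is unitarymx ->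
  \sum_j (kron U W *m rho *m (kron U W)^t*) (mxvec_index i j) (mxvec_index i j) =
  (U *m ptraceB rho *m U^t*) i i.
Proof.
move=> hW.
transitivity (\sum_j \sum_x \sum_y \sum_x' \sum_y'
   (U i x * rho (mxvec_index x y) (mxvec_index x' y') * (U i x')^*) * (W j y * (W j y')^*)).
  apply: eq_bigr => j _; rewrite mx3E sum_mxvec; apply: eq_bigr => x _.
  apply: eq_bigr => y _; rewrite sum_mxvec; apply: eq_bigr => x' _.
  apply: eq_bigr => y' _; rewrite /kron !mxE !vidxK /= rmorphM /=; ring.
rewrite collapseW // mx3E; apply: eq_bigr => x _.
rewrite exchange_big; apply: eq_bigr => x' _.
by rewrite !mxE mulr_sumr mulr_suml; apply: eq_bigr => y _.
Qed.

Lemma ptA_sum dA dB (U : 'M[C]_dA) (W : 'M[C]_dB) (rho : 'M[C]_(dA * dB)) j :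
  U \is unitarymx ->
  \sum_i (kron U W *m rho *m (kron U W)^t*) (mxvec_index i j) (mxvec_index i j) =
  (W *m ptraceA rho *m W^t*) j j.
Proof.
move=> hU.
transitivity (\sum_i \sum_x \sum_y \sum_x' \sum_y'
   (W j y * rho (mxvec_index x y) (mxvec_index x' y') * (W j y')^*) * (U i x * (U i x')^*)).
  apply: eq_bigr => i _; rewrite mx3E sum_mxvec; apply: eq_bigr => x _.
  apply: eq_bigr => y _; rewrite sum_mxvec; apply: eq_bigr => x' _.
  apply: eq_bigr => y' _; rewrite /kron !mxE !vidxK /= rmorphM /=; ring.
rewrite collapseU // mx3E exchange_big /=; apply: eq_bigr => y _.
rewrite exchange_big /=; apply: eq_bigr => y' _.
by rewrite !mxE mulr_sumr mulr_suml; apply: eq_bigr => x _.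
Qed.

Lemma normC2 (z : C) : z * z^* = (complex.Re (z * z^*))%:C /\ 0 <= complex.Re (z * z^*).
Proof. by apply: Cge0; rewrite mul_conjC_ge0. Qed.

Lemma diag_quad n m (Cm : 'M[C]_(m, n)) (d : 'rV[C]_n) r :
  (Cm *m diag_mx d *m Cm^t*) r r = \sum_k Cm r k * (Cm r k)^* * d 0 k.
Proof.
rewrite mxE; apply: eq_bigr => k _; rewrite mul_mx_diag !mxE; ring.
Qed.

Lemma herm_ptB dA dB (rho : 'M[C]_(dA * dB)) : rho^t* = rho -> (ptraceB rho)^t* = ptraceB rho.
Proof.
move=> h; apply/matrixP => x x'; rewrite !mxE rmorph_sum; apply: eq_bigr => y _.
by rewrite -{2}h !mxE.
Qed.

Lemma herm_ptA dA dB (rho : 'M[C]_(dA * dB)) : rho^t* = rho -> (ptraceA rho)^t* = ptraceA rho.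
Proof.
move=> h; apply/matrixP => x x'; rewrite !mxE rmorph_sum; apply: eq_bigr => y _.
by rewrite -{2}h !mxE.
Qed.
End LinAlg.

Section Marg.
Import numFieldNormedType.Exports.
Variable R : realType.
Lemma marg_a (N dA dB : nat) (p : 'I_N -> R) (m : 'I_N -> 'I_dA -> 'I_dB -> R) (a : 'I_dA -> R) :
  (forall k, \sum_i \sum_j m k i j = 1) -> \sum_k p k = 1 ->
  (forall i, a i = \sum_j \sum_k m k i j * p k) -> \sum_i a i = 1.
Proof.
move=> sm1 sp ha.
have S1 : \sum_k \sum_i \sum_j m k i j * p k = 1.
  rewrite -sp; apply: eq_bigr => k _; rewrite -[RHS]mul1r -(sm1 k) mulr_suml.
  by apply: eq_bigr => i _; rewrite mulr_suml.
rewrite -S1 exchange_big /=; apply: eq_bigr => i _; rewrite ha exchange_big //.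
Qed.
Lemma marg_b (N dA dB : nat) (p : 'I_N -> R) (m : 'I_N -> 'I_dA -> 'I_dB -> R) (b : 'I_dB -> R) :
  (forall k, \sum_i \sum_j m k i j = 1) -> \sum_k p k = 1 ->
  (forall j, b j = \sum_i \sum_k m k i j * p k) -> \sum_j b j = 1.
Proof.
move=> sm1 sp hb.
have S1 : \sum_k \sum_i \sum_j m k i j * p k = 1.
  rewrite -sp; apply: eq_bigr => k _; rewrite -[RHS]mul1r -(sm1 k) mulr_suml.
  by apply: eq_bigr => i _; rewrite mulr_suml.
rewrite -S1; symmetry; rewrite exchange_big /=.
rewrite (eq_bigr (fun i => \sum_j \sum_k m k i j * p k)); last first.
  by move=> i _; rewrite exchange_big.
by rewrite exchange_big /=; apply: eq_bigr => j _; rewrite hb.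
Qed.
Lemma tsallis_cvg n (M : 'M[R[i]]_n) :
  (forall k, 0 <= complex.Re (spectral_diag M 0 k)) ->
  \sum_k complex.Re (spectral_diag M 0 k) = 1 ->
  tsallis q M @[q --> 1^'+] --> vonNeumann M.
Proof.
move=> p0 sp.
have -> : (fun q => tsallis q M) =
  (fun q => (1 - q)^-1 * (\sum_k (complex.Re (spectral_diag M 0 k)) `^ q - 1)).
  by apply/funext => q; rewrite /tsallis trpowE.
rewrite vonNeumannE; exact: tsallis_lim.
Qed.

Lemma lim_max (f : R -> R) (l : R) : 0 <= l -> f x @[x --> 1^'+] --> l ->
  (Num.max (f x) 0)%:E @[x --> 1^'+] --> l%:E.
Proof.
move=> l0 hf; apply/fine_cvgP; split; first by apply: nearW.
apply/cvgrPdist_le => e e0.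
move/cvgrPdist_le : hf => /(_ e e0); apply: filterS => x h /=.
apply: le_trans h; rewrite /Num.max; case: ifP => h //.
rewrite subr0 !ger0_norm //; lra.
Qed.
End Marg.

Section Main.
Variable R : realType.
Local Notation C := (R[i]).
Local Open Scope sesquilinear_scope.
Local Open Scope complex_scope.

Lemma spec_all dA dB (rho : 'M[C]_(dA * dB)) : is_state rho ->
  [/\ 0 <= mutual_info rho,
     (forall i, 0 <= complex.Re (spectral_diag (ptraceB rho) 0 i)),
     \sum_i complex.Re (spectral_diag (ptraceB rho) 0 i) = 1,
     (forall j, 0 <= complex.Re (spectral_diag (ptraceA rho) 0 j)) &
     \sum_j complex.Re (spectral_diag (ptraceA rho) 0 j) = 1].
Proof.
move=> st; have [herm [psd tr1]] := st.
have [dge0 sp] := state_spec st.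
have hU := spectral_unitarymx (ptraceB rho).
have hW := spectral_unitarymx (ptraceA rho).
have hP := spectral_unitarymx rho.
pose P := spectralmx rho; pose d := spectral_diag rho.
pose U := spectralmx (ptraceB rho); pose W := spectralmx (ptraceA rho).
pose Q := kron U W.
pose Cm := Q *m P^t*.
have hC : Cm \is unitarymx by rewrite mul_unitarymx ?kron_unitary ?trmxC_unitary.
have F1 : rho = P^t* *m diag_mx d *m P.
  by rewrite -invmx_unitary //; apply/orthomx_spectralP/herm_normal.
have F2 : Q *m rho *m Q^t* = Cm *m diag_mx d *m Cm^t*.
  by rewrite {1}F1 /Cm trmx_mul map_mxM trmxCK !mulmxA.
have key : forall r, (Q *m rho *m Q^t*) r r = \sum_k (Cm r k * (Cm r k)^*) * d 0 k.
  by move=> r; rewrite F2 diag_quad.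
pose mm := fun k i j => complex.Re (Cm (mxvec_index i j) k * (Cm (mxvec_index i j) k)^*).
have dR : forall k, d 0 k = (complex.Re (d 0 k))%:C by move=> k; case: (Cge0 (dge0 k)).
have termR : forall k i j, complex.Re (Cm (mxvec_index i j) k * (Cm (mxvec_index i j) k)^* * d 0 k)
    = mm k i j * complex.Re (d 0 k).
  move=> k i j; rewrite {1}(dR k); case: (normC2 (Cm (mxvec_index i j) k)) => -> _.
  by rewrite -rmorphM.
have m0 : forall k i j, 0 <= mm k i j by move=> k i j; case: (normC2 (Cm (mxvec_index i j) k)).
have p0 : forall k, 0 <= complex.Re (d 0 k) by move=> k; case: (Cge0 (dge0 k)).
have sm1 : forall k, \sum_i \sum_j mm k i j = 1.
  move=> k; have := unit_cols hC k k; rewrite eqxx sum_mxvec => /(congr1 (@complex.Re R)).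
  rewrite Re_sum => h; transitivity (complex.Re ((true)%:R : C)); last by [].
  rewrite -h; apply: eq_bigr => i _; by rewrite Re_sum.
have sm2 : forall i j, \sum_k mm k i j = 1.
  move=> i j; have := unit_rows hC (mxvec_index i j) (mxvec_index i j).
  rewrite eqxx => /(congr1 (@complex.Re R)); rewrite Re_sum => h.
  by transitivity (complex.Re ((true)%:R : C)).
have ha : forall i, complex.Re (spectral_diag (ptraceB rho) 0 i) =
    \sum_j \sum_k mm k i j * complex.Re (d 0 k).
  move=> i; have -> : spectral_diag (ptraceB rho) 0 i = (U *m ptraceB rho *m U^t*) i i.
    by rewrite spec_conj ?herm_normal ?herm_ptB // mxE eqxx mulr1n.
  rewrite -(@ptB_sum R _ _ U W) // Re_sum; apply: eq_bigr => j _.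
  by rewrite key Re_sum; apply: eq_bigr => k _; rewrite termR.
have hb : forall j, complex.Re (spectral_diag (ptraceA rho) 0 j) =
    \sum_i \sum_k mm k i j * complex.Re (d 0 k).
  move=> j; have -> : spectral_diag (ptraceA rho) 0 j = (W *m ptraceA rho *m W^t*) j j.
    by rewrite spec_conj ?herm_normal ?herm_ptA // mxE eqxx mulr1n.
  rewrite -(@ptA_sum R _ _ U W) // Re_sum; apply: eq_bigr => i _.
  by rewrite key Re_sum; apply: eq_bigr => k _; rewrite termR.
split.
- have := subadd_real p0 m0 sp sm1 sm2 ha hb.
  rewrite /mutual_info !vonNeumannE; lra.
- by move=> i; rewrite ha; apply: sumr_ge0 => j _; apply: sumr_ge0 => k _; rewrite mulr_ge0.
- exact: marg_a sm1 sp ha.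
- by move=> j; rewrite hb; apply: sumr_ge0 => i _; apply: sumr_ge0 => k _; rewrite mulr_ge0.
- exact: marg_b sm1 sp hb.
Qed.

Lemma CqJT dA dB q (rho : 'M[C]_(dA * dB)) : CqJ q rho [set: 'I_2] =
  tsallis q (ptraceB rho) + tsallis q (ptraceA rho) - tsallis q rho.
Proof.
rewrite /CqJ (eq_bigl (fun _ => true)); last by move=> v; rewrite finset.in_setT.
rewrite big_ord_recl big_ord1 /SqJ.
by rewrite !eqset2 !inE.
Qed.

End Main.

Section Final.
Import numFieldNormedType.Exports.
Lemma corollary2_aux (R : realType) (dA dB : nat) (rho : 'M[R[i]]_(dA * dB)) :
  is_state rho ->
  Xrel rho q @[q --> 1^'+] --> (mutual_info rho)%:E /\
  Xred rho q @[q --> 1^'+] --> (mutual_info rho)%:E /\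
  0 <= mutual_info rho.
Proof.
move=> st; have [I0 a0 sa b0 sb] := spec_all st.
have [herm [psd tr1]] := st.
have [d0 sd] := state_spec st.
have p0 : forall k, 0 <= complex.Re (spectral_diag rho 0 k).
  by move=> k; case: (Cge0 (d0 k)).
have hc : CqJ q rho [set: 'I_2] @[q --> 1^'+] --> mutual_info rho.
  have -> : (fun q => CqJ q rho [set: 'I_2]) =
    (fun q => tsallis q (ptraceB rho) + tsallis q (ptraceA rho) - tsallis q rho).
    by apply/funext => q; rewrite CqJT.
  rewrite /mutual_info.
  apply: cvgB; first apply: cvgD; exact: tsallis_cvg.
have hX := lim_max I0 hc.
split; last split => //.
- have -> : (fun q => Xrel rho q) = (fun q => (Num.max (CqJ q rho [set: 'I_2]) 0)%:E).
    by apply/funext => q; rewrite Xrel_eq.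
  exact: hX.
- have -> : (fun q => Xred rho q) = (fun q => (Num.max (CqJ q rho [set: 'I_2]) 0)%:E).
    by apply/funext => q; rewrite Xred_eq.
  exact: hX.
Qed.

End Final.

Unset Implicit Arguments. Set Strict Implicit. Set Printing Implicit Defensive.

Theorem corollary2 (R : realType) (dA dB : nat) (rho : 'M[R[i]]_(dA * dB)) :
  is_state rho ->
  Xrel rho q @[q --> 1^'+] --> (mutual_info rho)%:E /\
  Xred rho q @[q --> 1^'+] --> (mutual_info rho)%:E /\
  0 <= mutual_info rho.
Proof. exact: corollary2_aux. Qed.
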